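(* Let $n\ge 2$, $\alpha\in(0,1)$ and $\rho\in\{\mathrm{VaR},\mathrm{ES}\}$, and let $\mathbf X=(X_1,\dots,X_n)$ be in $(L^0)^n$ when $\rho=\mathrm{VaR}$ and in $(L^1)^n$ when $\rho=\mathrm{ES}$. If $\mathbf X$ is $\alpha$-concentrated, then $\mathrm{DQ}^\rho_\alpha(\mathbf X)\le 1$. If, in addition, with $S=\sum_{i=1}^nX_i$, the map $\beta\mapsto\rho_\beta(S)$ is continuous at $\beta=\alpha$ and $\rho_\beta(S)>\rho_\alpha(S)$ for all $\beta\in(0,\alpha)$, then $\mathrm{DQ}^\rho_\alpha(\mathbf X)=1$.
   Context: Let $(\Omega,\mathcal F,\mathbb P)$ be an atomless probability space. $L^0$ is the set of all random variables and $L^1$ the set of integrable random variables; a.s. equal random variables are identified. For $\alpha\in[0,1)$ and $X\in L^0$, $\mathrm{VaR}_\alpha(X)=\inf\{x\in\mathbb R:\mathbb P(X\le x)\ge 1-\alpha\}$; in particular $\mathrm{VaR}_0(X)=\operatorname{ess\,sup}X$, possibly $+\infty$. For $\alpha\in(0,1)$ and $X\in L^1$, $\mathrm{ES}_\alpha(X)=\frac1\alpha\int_0^\alpha\mathrm{VaR}_\beta(X)\,\mathrm d\beta$, and $\mathrm{ES}_0(X)=\operatorname{ess\,sup}X$. For $\rho\in\{\mathrm{VaR},\mathrm{ES}\}$, $\alpha\in(0,1)$ and $\mathbf X=(X_1,\dots,X_n)$ (in $(L^0)^n$ when $\rho=\mathrm{VaR}$, in $(L^1)^n$ when $\rho=\mathrm{ES}$),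 the diversification quotient is $\mathrm{DQ}^\rho_\alpha(\mathbf X)=\alpha^*/\alpha$, where $\alpha^*=\inf\{\beta\in(0,1):\rho_\beta(\sum_{i=1}^nX_i)\le\sum_{i=1}^n\rho_\alpha(X_i)\}$, with the convention $\inf\emptyset=1$. A tail event of a random variable $X$ is an event $A\in\mathcal F$ with $0<\mathbb P(A)<1$ such that $X(\omega)\ge X(\omega')$ for a.s. all $\omega\in A$ and $\omega'\in A^c$. For $\alpha\in(0,1)$, a random vector $(X_1,\dots,X_n)$ is $\alpha$-concentrated if there is an event $A$ with $\mathbb P(A)=\alpha$ that is a tail event of every $X_i$, $i=1,\dots,n$. *)

(* Defs.v *)
From HB Require Import structures.
From mathcomp Require Import all_boot all_order all_algebra.
From mathcomp Require Import all_classical all_reals all_analysis.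
Set Implicit Arguments. Unset Strict Implicit. Unset Printing Implicit Defensive.
Import Order.TTheory GRing.Theory Num.Theory.
Import numFieldNormedType.Exports.
Local Open Scope classical_set_scope.
Local Open Scope ring_scope.

Section Risk.
Context {d : measure_display} {T : measurableType d} {R : realType}.
Variable P : probability T R.

Definition atomless : Prop :=
  forall A : set T, measurable A -> (0 < P A)%E ->
    exists B : set T, [/\ measurable B, B `<=` A & (0 < P B < P A)%E].

(* VaR_b(X) = inf {x in R | P(X <= x) >= 1 - b}, extended-real valued
   (VaR_0 = ess sup X, possibly +oo) *)
Definition VaR (b : R) (X : T -> R) : \bar R :=
  ereal_inf [set x%:E | x in [set x : R | ((1 - b)%:E <= P [set w | (X w <= x)%R])%E]].

Definition ES (b : R) (X : T -> R) : \bar R :=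
  if b == 0 then VaR 0 X
  else ((b^-1)%:E * \int[lebesgue_measure]_(c in `]0%R, b[%classic) VaR c X)%E.

Inductive risk_measure := rm_VaR | rm_ES.

Definition rho (r : risk_measure) : R -> (T -> R) -> \bar R :=
  match r with rm_VaR => VaR | rm_ES => ES end.

Definition admissible (r : risk_measure) (n : nat) (X : 'I_n -> T -> R) : Prop :=
  match r with
  | rm_VaR => forall i, measurable_fun setT (X i)
  | rm_ES => forall i, measurable_fun setT (X i) /\ P.-integrable setT (EFin \o X i)
  end.

Definition sumRV (n : nat) (X : 'I_n -> T -> R) : T -> R :=
  fun w => \sum_(i < n) X i w.

Definition alpha_star (r : risk_measure) (a : R) (n : nat) (X : 'I_n -> T -> R) : R :=
  let E := [set b : R | 0 < b < 1 /\
              (rho r b (sumRV X) <= \sum_(i < n) rho r a (X i))%E] in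
  if pselect (exists b, E b) then inf E else 1.

Definition DQ (r : risk_measure) (a : R) (n : nat) (X : 'I_n -> T -> R) : R :=
  alpha_star r a X / a.

(* tail event: 0 < P(A) < 1 and X(w) >= X(w') for a.s. all w in A, w' in A^c,
   i.e. outside a P-null set *)
Definition tail_event (X : T -> R) (A : set T) : Prop :=
  [/\ measurable A, (0 < P A)%E, (P A < 1)%E &
    exists N : set T, [/\ measurable N, P N = 0%E &
      forall w w', A w -> ~ N w -> ~ A w' -> ~ N w' -> (X w' <= X w)%R]].

Definition concentrated (a : R) (n : nat) (X : 'I_n -> T -> R) : Prop :=
  exists A : set T, P A = a%:E /\ forall i, tail_event (X i) A.

End Risk.

(* Main.v *)
Require Import Defs.
From HB Require Import structures.
From mathcomp Require Import all_boot all_order all_algebra.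
From mathcomp Require Import all_classical all_reals all_analysis.
From mathcomp Require Import measurable_realfun.
From mathcomp Require Import ring lra.
Import Order.TTheory GRing.Theory Num.Theory.
Import numFieldNormedType.Exports.
Local Open Scope classical_set_scope.
Local Open Scope ring_scope.

Section V.
Context {d : measure_display} {T : measurableType d} {R : realType}.
Variable P : probability T R.
Local Open Scope ereal_scope.
Lemma VaR_le (Y : T -> R) c x : (1 - c)%:E <= P [set w | (Y w <= x)%R] -> VaR P c Y <= x%:E.
Proof. by move=> h; apply: ereal_inf_lbound; exists x. Qed.
Lemma VaR_ge (Y : T -> R) c z : (forall x, (1 - c)%:E <= P [set w | (Y w <= x)%R] -> z <= x%:E) -> z <= VaR P c Y.
Proof. by move=> h; apply: le_ereal_inf_tmp => _ [x hx <-]; exact: h. Qed.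
End V.

Section S.
Context {d : measure_display} {T : measurableType d} {R : realType}.
Variable P : probability T R.
Variable Y : {RV P >-> R}.
Local Open Scope ereal_scope.
Lemma cdfE t : cdf Y t = P [set w | (Y w <= t)%R].
Proof. by rewrite /cdf /distribution /pushforward; congr (P _); apply/seteqP; split => w /=; rewrite in_itv. Qed.

Lemma cdf_mono x y : (x <= y)%R -> P [set w | (Y w <= x)%R] <= P [set w | (Y w <= y)%R].
Proof. by move=> xy; rewrite -!cdfE; apply: cdf_nondecreasing. Qed.

Lemma rc t (c : R) : P [set w | (Y w <= t)%R] < c%:E -> exists2 e, (0 < e)%R & P [set w | (Y w <= t + e)%R] < c%:E.
Proof.
rewrite -cdfE => H.
have [e /= e0 He] := @cdf_right_continuous _ _ _ _ Y t _ (open_nbhs_nbhs (conj (@open_ereal_lt_ereal _ c%:E) H)).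
exists (e/2)%R; first by rewrite divr_gt0.
rewrite -cdfE; apply: He => /=.
  have -> : (t - (t + e/2) = - (e/2))%R by ring.
  by rewrite normrN gtr0_norm ?divr_gt0 //; lra.
lra.
Qed.

Lemma VaR_fin (c : R) : (0 < c < 1)%R -> VaR P c Y \is a fin_num.
Proof.
case/andP => c0 c1.
have h1 : (1 - c)%:E < 1 by rewrite lte_fin; lra.
have [M [_ HM]] := @cvg_cdfy1 _ _ _ _ Y _ (open_nbhs_nbhs (conj (@open_ereal_gt_ereal _ (1 - c)%:E) h1)).
have h0 : 0 < (1 - c)%:E by rewrite lte_fin; lra.
have [M' [_ HM']] := @cvg_cdfNy0 _ _ _ _ Y _ (open_nbhs_nbhs (conj (@open_ereal_lt_ereal _ (1 - c)%:E) h0)).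
rewrite fin_numElt; apply/andP; split.
  apply: (@lt_le_trans _ _ (M' - 1)%:E); first exact: ltNyr.
  apply: VaR_ge => x hx; rewrite lee_fin; apply/negPn/negP; rewrite -ltNge => xM.
  have := HM' x; rewrite /= cdfE => /(_ _); move/(_ (lt_trans xM _)).
  by rewrite ltrBlDr ltrDl ltr01 => /(_ isT); rewrite ltNge hx.
apply: (@le_lt_trans _ _ (M + 1)%:E); last exact: ltry.
apply: VaR_le; have := HM (M + 1)%R; rewrite /= cdfE ltrDl ltr01 => /(_ isT) /ltW //.
Qed.

Lemma VaR_gt t c : (0 < c < 1)%R -> (t%:E < VaR P c Y) <-> P [set w | (Y w <= t)%R] < (1 - c)%:E.
Proof.
move=> c01; split.
  by move=> h; rewrite ltNge; apply/negP => /(VaR_le) h'; move: (lt_le_trans h h'); rewrite ltxx.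
move=> /rc [e e0 he].
apply: (@lt_le_trans _ _ (t + e)%:E); first by rewrite lte_fin ltrDl.
apply: VaR_ge => x hx; rewrite lee_fin; apply/negPn/negP; rewrite -ltNge => xe.
have := @cdf_mono _ _ (ltW xe); move=> /(le_trans hx) /le_lt_trans /(_ he); rewrite ltxx //.
Qed.
End S.
Section T.
Context {d : measure_display} {T : measurableType d} {R : realType}.
Variable P : probability T R.
Local Open Scope ereal_scope.
Definition pr (S : set T) : R := fine (P S).
Lemma prE S : measurable S -> P S = (pr S)%:E.
Proof. by move=> mS; rewrite /pr fineK // fin_num_measure. Qed.
Lemma pr_ge0 S : (0 <= pr S)%R.
Proof. by rewrite /pr fine_ge0. Qed.
Lemma pr_le1 S : measurable S -> (pr S <= 1)%R.
Proof. by move=> mS; rewrite -lee_fin -prE // probability_le1. Qed.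
Lemma pr_mono S S' : measurable S -> measurable S' -> S `<=` S' -> (pr S <= pr S')%R.
Proof. by move=> mS mS' SS; rewrite -lee_fin -!prE //; apply: le_measure => //; rewrite inE. Qed.
Lemma prU S S' : measurable S -> measurable S' -> S `&` S' = set0 -> pr (S `|` S') = (pr S + pr S')%R.
Proof. by move=> mS mS' SS; apply: EFin_inj; rewrite -prE ?EFinD -?prE //; [rewrite measureU|exact: measurableU]. Qed.
Lemma prC S : measurable S -> pr (~` S) = (1 - pr S)%R.
Proof. by move=> mS; apply: EFin_inj; rewrite -prE ?probability_setC ?EFinB -?prE //; exact: measurableC. Qed.
Lemma prT : pr setT = 1%R.
Proof. by rewrite /pr probability_setT. Qed.

Variable Y : T -> R.
Hypothesis mY : measurable_fun setT Y.
Lemma mle x : measurable [set w | (Y w <= x)%R].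
Proof.
have -> : [set w | (Y w <= x)%R] = setT `&` Y @^-1` `]-oo, x] by rewrite setTI; apply/seteqP; split => w /=; rewrite in_itv //=.
exact: mY.
Qed.
Lemma mgt x : measurable [set w | (x < Y w)%R].
Proof.
have -> : [set w | (x < Y w)%R] = setT `&` Y @^-1` `]x, +oo[ by rewrite setTI; apply/seteqP; split => w /=; rewrite in_itv /= ?andbT.
exact: mY.
Qed.
Lemma gtC x : [set w | (x < Y w)%R] = ~` [set w | (Y w <= x)%R].
Proof. by apply/seteqP; split => w /=; rewrite ltNge => /negP. Qed.

Variables (A N : set T) (a : R).
Hypotheses (mA : measurable A) (PA : P A = a%:E) (mN : measurable N) (PN : P N = 0)
  (tl : forall w w', A w -> ~ N w -> ~ A w' -> ~ N w' -> (Y w' <= Y w)%R).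

Lemma prDnull S M : measurable S -> measurable M -> P M = 0 -> pr (S `\` M) = pr S.
Proof.
move=> mS mM PM.
have eA : S = (S `\` M) `|` (S `&` M).
  apply/seteqP; split=> w /=; last by case=> [][].
  by move=> Aw; case: (pselect (M w)) => Nw; [right|left].
have h : pr S = (pr (S `\` M) + pr (S `&` M))%R.
  rewrite {1}eA prU //; [exact: measurableD|exact: measurableI|].
  by apply/seteqP; split=> w //= [][] _ + [] _.
have h2 : pr (S `&` M) = 0%R.
  apply/eqP; rewrite eq_le pr_ge0 andbT.
  have -> : 0%R = pr M by rewrite /pr PM.
  by apply: pr_mono => //; exact: measurableI.
by move: h; rewrite h2 addr0.
Qed.
Lemma prA : pr A = a.
Proof. by rewrite /pr PA. Qed.
Lemma prN : pr N = 0%R.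
Proof. by rewrite /pr PN. Qed.
Lemma prAN : pr (A `\` N) = a.
Proof. by rewrite prDnull // prA. Qed.

Lemma KL x : (1 - a)%:E <= P [set w | (Y w <= x)%R] -> P (~` A `&` [set w | (x < Y w)%R]) = 0.
Proof.
rewrite (prE _ (mle x)) lee_fin => h.
have mB : measurable (~` A `&` [set w | (x < Y w)%R]) by apply: measurableI; [exact: measurableC|exact: mgt].
apply/eqP; rewrite eq_le measure_ge0 andbT leNgt; apply/negP => Bpos.
have [w' [[nAw' xw'] nNw']] : exists w', (~` A `&` [set w | (x < Y w)%R]) w' /\ ~ N w'.
  apply/not_existsP => hn; move: Bpos; apply/negP; rewrite -leNgt -PN.
  apply: le_measure; rewrite ?inE // => w Bw; move: (hn w) => /not_andP [//|/contrapT //].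
have sub : (A `\` N) `|` (~` A `&` [set w | (x < Y w)%R]) `<=` [set w | (x < Y w)%R].
  move=> w []; last by case.
  by move=> [Aw nNw]; exact: (lt_le_trans xw' (tl _ _ Aw nNw nAw' nNw')).
have hU := @pr_mono _ _ (measurableU _ _ (measurableD mA mN) mB) (mgt x) sub.
rewrite prU in hU; [|exact: measurableD|exact: mB|]; last first.
  by apply/seteqP; split => w //= [][] Aw _ [].
have hC : pr [set w | (x < Y w)%R] = (1 - pr [set w | (Y w <= x)%R])%R by rewrite gtC prC //; exact: mle.
move: hU; rewrite prAN hC.
move: Bpos; rewrite (prE _ mB) lte_fin => Bpos; lra.
Qed.

Lemma KLc x M : measurable M -> P M = 0 -> (forall w, ~ A w -> ~ M w -> (Y w <= x)%R) -> (1 - a)%:E <= P [set w | (Y w <= x)%R].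
Proof.
move=> mM PM hM; rewrite (prE _ (mle x)) lee_fin.
have := @pr_mono _ _ (measurableD (measurableC mA) mM) (mle x) (fun w '(conj nA nM) => hM w nA nM).
by rewrite prDnull ?prC ?prA //; exact: measurableC.
Qed.
End T.
Arguments KL {d T R P Y} mY {A N a} mA PA mN PN tl x _.
Arguments KLc {d T R P Y} mY {A a} mA PA {x M} _ _ _.
Arguments mle {d T R Y} mY x.
Arguments mgt {d T R Y} mY x.
Arguments VaR_le {d T R P Y c x} _.
Arguments VaR_ge {d T R P Y c z} _.
Arguments prE {d T R P S} _.
Definition mkRV {d} {T : measurableType d} {R : realType} {f : T -> R} (mf : measurable_fun setT f) : {mfun T >-> R} :=
  MeasurableFun.Pack (MeasurableFun.Class (isMeasurableFun.Build _ _ _ _ f mf)).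

Section W.
Context {d : measure_display} {T : measurableType d} {R : realType}.
Variable P : probability T R.
Local Open Scope ereal_scope.
Lemma VaR_finf (f : T -> R) (mf : measurable_fun setT f) c : (0 < c < 1)%R -> VaR P c f \is a fin_num.
Proof. move=> c01; have := @VaR_fin _ _ _ P (mkRV mf) c c01. exact. Qed.
Lemma VaR_gtf (f : T -> R) (mf : measurable_fun setT f) t c : (0 < c < 1)%R -> (t%:E < VaR P c f) <-> P [set w | (f w <= t)%R] < (1 - c)%:E.
Proof. move=> c01; have := @VaR_gt _ _ _ P (mkRV mf) t c c01. exact. Qed.
Lemma VaR_attained (f : T -> R) (mf : measurable_fun setT f) c : (0 < c < 1)%R -> (1 - c)%:E <= P [set w | (f w <= fine (VaR P c f))%R].
Proof.
move=> c01; rewrite leNgt; apply/negP => /(VaR_gtf f mf _ _ c01).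
by rewrite fineK ?ltxx // VaR_finf.
Qed.

Lemma null_bigU (I : Type) (r : seq I) (F : I -> set T) : (forall i, measurable (F i) /\ P (F i) = 0) ->
  measurable (\big[setU/set0]_(i <- r) F i) /\ P (\big[setU/set0]_(i <- r) F i) = 0.
Proof.
move=> h; apply: (big_ind (fun S => measurable S /\ P S = 0)).
- by split; [exact: measurable0|exact: measure0].
- by move=> S S' [mS PS] [mS' PS']; split; [exact: measurableU|rewrite measureU0].
- by move=> i _; exact: h.
Qed.

Lemma left_limit (f : R -> \bar R) a s : (0 < a)%R -> {for a, continuous f} -> (forall b, (0 < b < a)%R -> s <= f b) -> s <= f a.
Proof.
move=> a0 hc hb.
apply: (closed_cvg [set z | s <= z]) (@closed_ereal_le_ereal _ s) _ _ (cvg_at_left_filter hc).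
near=> b; apply: hb; apply/andP; split; near: b; [exact: nbhs_left_gt|exact: nbhs_left_lt].
Unshelve. all: by end_near.
Qed.
End W.

Section Main.
Context {d : measure_display} {T : measurableType d} {R : realType}.
Variable P : probability T R.
Variables (n : nat) (X : 'I_n -> T -> R) (mX : forall i, measurable_fun setT (X i)).
Variables (A : set T) (a : R).
Hypotheses (a01 : (0 < a < 1)%R) (mA : measurable A) (PA : P A = a%:E).
Variables (Nf : 'I_n -> set T).
Hypotheses (mNf : forall i, measurable (Nf i)) (PNf : forall i, P (Nf i) = 0)
  (tlf : forall i w w', A w -> ~ Nf i w -> ~ A w' -> ~ Nf i w' -> (X i w' <= X i w)%R).
Local Open Scope ereal_scope.

Let S := sumRV X.
Lemma mS : measurable_fun setT S.
Proof. exact: measurable_sum. Qed.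
Let Nall := \big[setU/set0]_(i <- enum 'I_n) Nf i.
Lemma NallP : measurable Nall /\ P Nall = 0.
Proof. by apply: null_bigU => i; split. Qed.
Lemma inNall i w : Nf i w -> Nall w.
Proof.
move=> h; rewrite /Nall (bigD1_seq i) ?mem_enum ?enum_uniq //=; by left.
Qed.
Lemma tlS w w' : A w -> ~ Nall w -> ~ A w' -> ~ Nall w' -> (S w' <= S w)%R.
Proof.
move=> Aw nw nAw' nw'; rewrite /S /sumRV; apply: ler_sum => i _.
by apply: tlf => // h; [apply: nw|apply: nw']; exact: inNall h.
Qed.

Lemma VaR_sub : VaR P a S <= \sum_(i < n) VaR P a (X i).
Proof.
pose r i := fine (VaR P a (X i)).
have hr i : (1 - a)%:E <= P [set w | (X i w <= r i)%R] by exact: VaR_attained.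
pose M := \big[setU/set0]_(i <- enum 'I_n) (~` A `&` [set w | (r i < X i w)%R]).
have [mM PM] : measurable M /\ P M = 0.
  apply: null_bigU => i; split; first by apply: measurableI; [exact: measurableC|exact: mgt].
  exact: (KL (mX i) mA PA (mNf i) (PNf i) (tlf i) _ (hr i)).
have -> : \sum_(i < n) VaR P a (X i) = (\sum_(i < n) r i)%:E.
  rewrite -sumEFin; apply: eq_bigr => i _; rewrite /r fineK //; exact: VaR_finf.
apply: VaR_le; apply: (KLc mS mA PA mM PM) => w nA nM.
rewrite /S /sumRV; apply: ler_sum => i _; rewrite leNgt; apply/negP => h; apply: nM.
rewrite /M (bigD1_seq i) ?mem_enum ?enum_uniq //=; by left.
Qed.

Lemma VaR_sup b : (0 < b < a)%R -> \sum_(i < n) VaR P a (X i) <= VaR P b S.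
Proof.
case/andP => b0 ba.
have [mN PN] := NallP.
have hq i w : A w -> ~ Nf i w -> VaR P a (X i) <= (X i w)%:E.
  move=> Aw nw; apply: VaR_le; apply: (KLc (mX i) mA PA (mNf i) (PNf i)) => w' nA' nw'.
  exact: tlf.
apply: VaR_ge => x hx; rewrite leNgt; apply/negP => hlt.
have sub : [set w | (S w <= x)%R] `<=` ~` A `|` Nall.
  move=> w /= Sw; case: (pselect (A w)) => Aw; last by left.
  case: (pselect (Nall w)) => nw; first by right.
  exfalso; move: Sw; apply/negP; rewrite -ltNge -lte_fin.
  apply: (lt_le_trans hlt); rewrite /S /sumRV -sumEFin; apply: lee_sum => i _.
  by apply: hq => // h; apply: nw; exact: inNall h.
have mU : measurable (~` A `|` Nall) by apply: measurableU => //; exact: measurableC.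
have h1 := pr_mono P _ _ (mle mS x) mU sub.
have hU : pr P (~` A `|` Nall) = pr P (~` A) by rewrite /pr measureU0 //; exact: measurableC.
have hC : pr P (~` A) = (1 - a)%R by rewrite prC // /pr PA.
rewrite (prE (mle mS x)) lee_fin in hx.
move: h1; rewrite hU hC => /(le_trans hx) h2.
move: ba; rewrite ltNge => /negP; apply.
by rewrite -lerN2 -(lerD2l 1%R).
Qed.
End Main.
Section EMU.
Context {R : realType}.
Local Open Scope ereal_scope.
Lemma ereal_measure_eq (m1 m2 : measure (\bar R) R) : m1 setT = m2 setT -> m1 setT < +oo ->
  (forall r : R, m1 `]r%:E, +oo[%classic = m2 `]r%:E, +oo[%classic) ->
  forall B, measurable B -> m1 B = m2 B.
Proof.
move=> hT hfin hG B mB.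
pose G' := [set S : set (\bar R) | (exists r : R, S = `]r%:E, +oo[%classic) \/ S = setT].
apply: (measure_unique G' (fun=> setT)) => //.
- have -> : @measurable _ (\bar R) = (ErealGenOInfty.G (R:=R)).-sigma.-measurable by exact: ErealGenOInfty.measurableE.
  apply/seteqP; split.
    apply: smallest_sub; first exact: smallest_sigma_algebra.
    by move=> S GS; apply: sub_sigma_algebra; left.
  apply: smallest_sub; first exact: smallest_sigma_algebra.
  move=> S [GS|->]; first exact: sub_sigma_algebra.
  exact: measurableT.
- move=> S S' [[r ->]|->] [[r' ->]|->]; rewrite ?setIT ?setTI; try by [left; exists r|left; exists r'|right].
  left; exists (Num.max r r'); apply/seteqP; split => x /=; rewrite ?in_itv /= ?andbT.
    by move=> [h1 h2]; rewrite EFin_max gt_max h1 h2.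
  by rewrite EFin_max gt_max => /andP[h1 h2]; split.
- by move=> _; right.
- by rewrite bigcup_const.
- by move=> S [[r ->]|->].
Qed.
End EMU.

Section ESrep.
Context {d : measure_display} {T : measurableType d} {R : realType}.
Variable P : probability T R.
Variables (Y : T -> R) (A N : set T) (a : R).
Hypotheses (mY : measurable_fun setT Y) (a01 : (0 < a < 1)%R) (mA : measurable A) (PA : P A = a%:E)
  (mN : measurable N) (PN : P N = 0)
  (tl : forall w w', A w -> ~ N w -> ~ A w' -> ~ N w' -> (Y w' <= Y w)%R).
Local Open Scope ereal_scope.

Let D : set R := `]0%R, a[%classic.
Let q c := VaR P c Y.
Let p r := pr P [set w | (r < Y w)%R].

Lemma D01 c : D c -> (0 < c < 1)%R.
Proof.
rewrite /D /= in_itv /= => /andP[c0 ca]; rewrite c0 /=.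
by apply: (lt_trans ca); case/andP: a01.
Qed.

Lemma qD c : D c -> q c \is a fin_num.
Proof. by move=> /D01 c01; exact: (VaR_finf P _ mY _ c01). Qed.

Lemma leYp r : pr P [set w | (Y w <= r)%R] = (1 - p r)%R.
Proof.
rewrite /p (gtC Y r) (prC P _ (mle mY r)).
by rewrite opprB addrC subrK.
Qed.

Lemma qgt r c : D c -> (r%:E < q c) <-> (c < p r)%R.
Proof.
move=> /D01 c01; rewrite (VaR_gtf P Y mY r c c01) (prE (mle mY r)) lte_fin leYp.
by split => h; lra.
Qed.

Lemma PAgt r : P (A `&` [set w | (r < Y w)%R]) = (Num.min a (p r))%:E.
Proof.
have mI : measurable (A `&` [set w | (r < Y w)%R]) by apply: measurableI => //; exact: mgt.
rewrite (prE mI); congr EFin.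
have [pa|ap] := leP (p r) a.
  have h : (1 - a)%:E <= P [set w | (Y w <= r)%R].
    by rewrite (prE (mle mY r)) lee_fin leYp; lra.
  have h0 := KL mY mA PA mN PN tl r h.
  have -> : A `&` [set w | (r < Y w)%R] = [set w | (r < Y w)%R] `\` (~` A `&` [set w | (r < Y w)%R]).
    apply/seteqP; split => w /=; first by move=> [Aw rw]; split => // -[].
    by move=> [rw] /not_andP [/contrapT Aw|//].
  rewrite prDnull //; first exact: mgt.
  by apply: measurableI; [exact: measurableC|exact: mgt].
have sub : A `\` N `<=` A `&` [set w | (r < Y w)%R].
  move=> w [Aw nNw]; split => //; rewrite /= ltNge; apply/negP => Ywr.
  have h : (1 - a)%:E <= P [set w | (Y w <= r)%R].
    by apply: (KLc mY mA PA mN PN) => w' nA' nN'; exact: (le_trans (tl _ _ Aw nNw nA' nN')).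
  move: h; rewrite (prE (mle mY r)) lee_fin leYp; lra.
apply/eqP; rewrite eq_le; apply/andP; split.
  by rewrite -(prA P A a PA); apply: pr_mono => //; apply: subIsetl.
by rewrite -(prAN P A N a mA PA mN PN); apply: pr_mono => //; exact: measurableD.
Qed.
Let phi (c : R) : \bar R := if c \in D then q c else +oo.
Let psi (w : T) : \bar R := if w \in A then (Y w)%:E else +oo.
Let B0 : set (\bar R) := [set x%:E | x in [set: R]].
Let mB0 : measurable B0.
Proof. by apply: measurable_image_EFin; exact: measurableT. Qed.
Let mD : measurable D.
Proof. exact: measurable_itv. Qed.

Let m r := Num.min a (p r).

Lemma phi_gt r : phi @^-1` `]r%:E, +oo[%classic = `]0%R, m r[%classic `|` ~` D.
Proof.
apply/seteqP; split => c /=; rewrite /phi; case: ifPn => cD.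
- rewrite in_itv /= andbT => /(qgt _ _ (set_mem cD)) cp; left.
  move: (set_mem cD); rewrite /D /= !in_itv /= => /andP[c0 ca].
  by rewrite c0 /m lt_min ca cp.
- by move=> _; right => /mem_set; rewrite (negbTE cD).
- move=> [|]; last by move=> /(_ (set_mem cD)).
  rewrite /= !in_itv /= andbT /m lt_min => /andP[_ /andP[_ cp]].
  by apply/(qgt _ _ (set_mem cD)).
- by move=> _; rewrite in_itv /= andbT ltry.
Qed.

Lemma phi_B0 : phi @^-1` B0 = D.
Proof.
apply/seteqP; split => c /=; rewrite /phi; case: ifPn => cD.
- by move=> _; exact: set_mem.
- by case.
- move=> _; exists (fine (q c)) => //; rewrite fineK //; exact: qD _ (set_mem cD).
- by move=> Dc; move: cD; rewrite (mem_set Dc).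
Qed.

Lemma phi_gtB0 r : phi @^-1` (`]r%:E, +oo[%classic `&` B0) = `]0%R, m r[%classic.
Proof.
rewrite preimage_setI phi_gt phi_B0 setIUl setICl setU0; apply/setIidl.
move=> c; rewrite /D /= !in_itv /= /m lt_min => /andP[c0 /andP[ca _]].
by rewrite c0 ca.
Qed.

Lemma mphi : measurable_fun setT phi.
Proof.
apply: (measurability _ (ErealGenOInfty.measurableE R)) => /= _ [_ [r ->] <-].
rewrite setTI phi_gt; apply: measurableU; first exact: measurable_itv.
exact: measurableC.
Qed.

Lemma psi_gt r : psi @^-1` `]r%:E, +oo[%classic = (A `&` [set w | (r < Y w)%R]) `|` ~` A.
Proof.
apply/seteqP; split => w /=; rewrite /psi; case: ifPn => wA.
- by rewrite in_itv /= andbT lte_fin => h; left; split => //; exact: set_mem.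
- by move=> _; right => /mem_set; rewrite (negbTE wA).
- by move=> [[_ h]|/(_ (set_mem wA))//]; rewrite in_itv /= andbT lte_fin.
- by move=> _; rewrite in_itv /= andbT ltry.
Qed.

Lemma psi_B0 : psi @^-1` B0 = A.
Proof.
apply/seteqP; split => w /=; rewrite /psi; case: ifPn => wA.
- by move=> _; exact: set_mem.
- by case.
- by move=> _; exists (Y w).
- by move=> Aw; move: wA; rewrite (mem_set Aw).
Qed.

Lemma psi_gtB0 r : psi @^-1` (`]r%:E, +oo[%classic `&` B0) = A `&` [set w | (r < Y w)%R].
Proof.
rewrite preimage_setI psi_gt psi_B0 setIUl setICl setU0; apply/setIidl.
by move=> w [].
Qed.

Lemma mpsi : measurable_fun setT psi.
Proof.
apply: (measurability _ (ErealGenOInfty.measurableE R)) => /= _ [_ [r ->] <-].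
rewrite setTI psi_gt; apply: measurableU; last exact: measurableC.
by apply: measurableI => //; exact: mgt.
Qed.

Lemma lam_m r : lebesgue_measure (`]0%R, m r[%classic : set R) = (m r)%:E.
Proof.
have m0 : (0 <= m r)%R by rewrite /m le_min pr_ge0 andbT; case/andP: a01 => /ltW.
rewrite lebesgue_measure_itv /= lte_fin; case: ltP => h.
  by rewrite -EFinB subr0.
by apply/esym; congr EFin; apply/eqP; rewrite eq_le m0 h.
Qed.
Definition mu1 : measure (\bar R) R.
Proof. refine (pushforward lebesgue_measure phi); exact: mphi. Defined.
Definition mu2 : measure (\bar R) R.
Proof. refine (pushforward P psi); exact: mpsi. Defined.

Lemma lamD : lebesgue_measure D = a%:E.
Proof.
rewrite /D lebesgue_measure_itv /= lte_fin; case/andP: a01 => a0 _.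
by rewrite a0 -EFinB subr0.
Qed.

Lemma mu12 B : measurable B -> B `<=` B0 -> mu1 B = mu2 B.
Proof.
move=> mB BB0.
pose nu1 : measure (\bar R) R := mrestr mu1 mB0.
pose nu2 : measure (\bar R) R := mrestr mu2 mB0.
have hT : nu1 setT = nu2 setT.
  change (lebesgue_measure (phi @^-1` (setT `&` B0)) = P (psi @^-1` (setT `&` B0))).
  by rewrite !setTI phi_B0 psi_B0 PA lamD.
have hfin : nu1 setT < +oo.
  change (lebesgue_measure (phi @^-1` (setT `&` B0)) < +oo).
  by rewrite setTI phi_B0 lamD; exact: ltry.
have hG : forall r : R, nu1 `]r%:E, +oo[%classic = nu2 `]r%:E, +oo[%classic.
  move=> r.
  change (lebesgue_measure (phi @^-1` (`]r%:E, +oo[%classic `&` B0)) = P (psi @^-1` (`]r%:E, +oo[%classic `&` B0))).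
  by rewrite phi_gtB0 psi_gtB0 lam_m PAgt.
have h := @ereal_measure_eq _ nu1 nu2 hT hfin hG B mB.
have e1 : nu1 B = mu1 (B `&` B0) by [].
have e2 : nu2 B = mu2 (B `&` B0) by [].
by move: h; rewrite e1 e2 setIidl.
Qed.

Lemma ES_rep (intY : P.-integrable setT (EFin \o Y)) :
  \int[lebesgue_measure]_(c in D) q c = \int[P]_(w in A) (Y w)%:E.
Proof.
have ipsi : P.-integrable A psi.
  apply: (eq_integrable mA (EFin \o Y)).
    by move=> w wA; rewrite /psi wA.
  exact: (integrableS measurableT mA (@subsetT _ A) intY).
have mphiD : measurable_fun D phi by exact: (measurable_funS measurableT (@subsetT _ D) mphi).
have E2 : \int[pushforward P psi]_(y in B0) y = \int[P]_(x in A) psi x.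
  have := @integral_pushforward _ _ _ _ _ psi mpsi P B0 (fun y => y) (@measurable_id _ _ setT).
  by rewrite psi_B0 => /(_ ipsi mB0).
have mabs : measurable_fun B0 (@abse R) by exact: abse_measurable.
have Eabs : \int[lebesgue_measure]_(x in D) `|phi x| = \int[P]_(x in A) `|psi x|.
  have := @ge0_integral_pushforward _ _ (measurableTypeR R) _ _ phi mphi lebesgue_measure B0 abse mB0 mabs (fun y _ => abse_ge0 y).
  rewrite phi_B0 => <-.
  have := @ge0_integral_pushforward _ _ _ _ _ psi mpsi P B0 abse mB0 mabs (fun y _ => abse_ge0 y).
  rewrite psi_B0 => <-.
  change (\int[mu1]_(y in B0) `|y| = \int[mu2]_(y in B0) `|y|).
  by apply: eq_measure_integral => S mS SB0; rewrite mu12.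
have iphi : lebesgue_measure.-integrable D phi.
  apply/integrableP; split => //; rewrite Eabs.
  by case/integrableP: ipsi.
have E1 : \int[pushforward lebesgue_measure phi]_(y in B0) y = \int[lebesgue_measure]_(x in D) phi x.
  have := @integral_pushforward _ _ (measurableTypeR R) _ _ phi mphi lebesgue_measure B0 (fun y => y) (@measurable_id _ _ setT).
  by rewrite phi_B0 => /(_ iphi mB0).
transitivity (\int[lebesgue_measure]_(x in D) phi x).
  by apply: eq_integral => c cD; rewrite /phi cD.
transitivity (\int[P]_(x in A) psi x); last first.
  by apply: eq_integral => w wA; rewrite /psi wA.
rewrite -E1 -E2.
change (\int[mu1]_(y in B0) y = \int[mu2]_(y in B0) y).
by apply: eq_measure_integral => S mS SB0; rewrite mu12.
Qed.
End ESrep.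


Lemma ES_eq {d} {T : measurableType d} {R : realType} (P : probability T R) (n : nat) (X : 'I_n -> T -> R)
  (mX : forall i, measurable_fun setT (X i)) (intX : forall i, P.-integrable setT (EFin \o X i))
  (A : set T) (a : R) (a01 : 0 < a < 1) (mA : measurable A) (PA : P A = a%:E)
  (Nf : 'I_n -> set T) (mNf : forall i, measurable (Nf i)) (PNf : forall i, P (Nf i) = 0%E)
  (tlf : forall i w w', A w -> ~ Nf i w -> ~ A w' -> ~ Nf i w' -> X i w' <= X i w) :
  ES P a (sumRV X) = (\sum_(i < n) ES P a (X i))%E.
Proof.
have [mN PN] := NallP P _ _ mNf PNf.
have mSX : measurable_fun setT (sumRV X) by exact: measurable_sum.
have a0 : a != 0 by case/andP: a01 => a0 _; rewrite gt_eqF.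
have intS : P.-integrable setT (EFin \o sumRV X).
  apply: (eq_integrable measurableT (fun w => (\sum_(i < n) (X i w)%:E)%E)).
    by move=> w _; rewrite /sumRV /= sumEFin.
  by apply: integrable_sum => // i _; exact: intX.
have intA i : P.-integrable A (EFin \o X i) by exact: (integrableS measurableT mA (@subsetT _ A) (intX i)).
rewrite /ES (negbTE a0).
rewrite (ES_rep P (sumRV X) A _ a mSX a01 mA PA mN PN (@tlS _ _ _ _ X A Nf tlf) intS).
under eq_bigr do rewrite (ES_rep P (X _) A (Nf _) a (mX _) a01 mA PA (mNf _) (PNf _) (tlf _) (intX _)).
have -> : (\int[P]_(w in A) (sumRV X w)%:E = \sum_(i < n) \int[P]_(w in A) (X i w)%:E)%E.
  rewrite -integral_sum //; apply: eq_integral => w _.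
  by rewrite /sumRV sumEFin.
have fin i : (\int[P]_(w in A) (X i w)%:E)%E \is a fin_num by exact: integrable_fin_num (intA i).
transitivity ((a^-1)%:E * (\sum_(i < n) fine (\int[P]_(w in A) (X i w)%:E))%:E)%E.
  by rewrite -sumEFin; congr (_ * _)%E; apply: eq_bigr => i _; rewrite fineK.
rewrite -EFinM mulr_sumr -sumEFin; apply: eq_bigr => i _.
by rewrite EFinM fineK.
Qed.

Theorem theorem1 (d : measure_display) (T : measurableType d) (R : realType)
  (P : probability T R) (n : nat) (a : R) (r : risk_measure)
  (X : 'I_n -> T -> R) :
  atomless P -> (2 <= n)%N -> 0 < a < 1 ->
  admissible P r X ->
  concentrated P a X ->
  DQ P r a X <= 1 /\
  ({for a, continuous (fun b => rho P r b (sumRV X))} ->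
   (forall b, 0 < b < a -> (rho P r a (sumRV X) < rho P r b (sumRV X))%E) ->
   DQ P r a X = 1).
Proof.
move=> _ n2 a01 adm [A [PA tailX]].
have n0 : (0 < n)%N by apply: leq_trans n2.
pose i0 : 'I_n := Ordinal n0.
have mA : measurable A by case: (tailX i0).
have /choice [Nf hN] : forall i : 'I_n, exists N : set T, [/\ measurable N, P N = 0%E &
    forall w w', A w -> ~ N w -> ~ A w' -> ~ N w' -> X i w' <= X i w].
  by move=> i; case: (tailX i) => _ _ _ [N hN]; exists N.
have mNf i : measurable (Nf i) by case: (hN i).
have PNf i : P (Nf i) = 0%E by case: (hN i).
have tlf i : forall w w', A w -> ~ Nf i w -> ~ A w' -> ~ Nf i w' -> X i w' <= X i w by case: (hN i).
have mX : forall i, measurable_fun setT (X i).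
  by case: r adm => adm i; [exact: adm|case: (adm i)].
have a0 : 0 < a by case/andP: a01.
have K1 : (rho P r a (sumRV X) <= \sum_(i < n) rho P r a (X i))%E.
  case: r adm => adm /=; first exact: (VaR_sub P _ X mX A a a01 mA PA Nf mNf PNf tlf).
  have intX i : P.-integrable setT (EFin \o X i) by case: (adm i).
  by rewrite (ES_eq P _ _ mX intX _ _ a01 mA PA _ mNf PNf tlf).
have K2 : {for a, continuous (fun b => rho P r b (sumRV X))} ->
    (\sum_(i < n) rho P r a (X i) <= rho P r a (sumRV X))%E.
  clear K1; case: r adm => adm /= hc.
    apply: (left_limit _ a _ a0 hc) => b hb.
    exact: (VaR_sup P _ X mX A a mA PA Nf mNf PNf tlf b hb).
  have intX i : P.-integrable setT (EFin \o X i) by case: (adm i).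
  by rewrite (ES_eq P _ _ mX intX _ _ a01 mA PA _ mNf PNf tlf).
pose E := [set b : R | 0 < b < 1 /\ (rho P r b (sumRV X) <= \sum_(i < n) rho P r a (X i))%E].
have Ea : E a by split.
have hlb : has_lbound E by exists 0 => b [/andP[b0 _] _]; exact: ltW.
have astar : alpha_star P r a X = inf E.
  rewrite /alpha_star /=; case: pselect => // h; exfalso; apply: h; exists a; exact: Ea.
have infa : inf E <= a by exact: (ge_inf hlb Ea).
split.
  by rewrite /DQ astar ler_pdivrMr // mul1r.
move=> hc hlt.
have K : rho P r a (sumRV X) = \sum_(i < n) rho P r a (X i) by apply/le_anti; rewrite K1 K2.
have ainf : a <= inf E.
  apply: lb_le_inf; first by exists a.
  move=> b [/andP[b0 b1] hb]; rewrite leNgt; apply/negP => ba.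
  have := hlt b (introT andP (conj b0 ba)); rewrite K => /(le_lt_trans hb).
  by rewrite ltxx.
have ea : alpha_star P r a X = a by rewrite astar; apply/le_anti; rewrite infa ainf.
by rewrite /DQ ea divff // gt_eqF.
Qed.
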